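(* Let $r$ be a Lyndon word with $|r|\ge2$ and standard factorization $r=r's'$, and let $u$ be a nonempty word such that $u\le s'$ and $ru$ is a Lyndon word. Then the lexicographically smallest proper nonempty suffix of $ru$ is a suffix of $u$ (i.e., has length at most $|u|$).
   Context: Words are finite sequences over a totally ordered alphabet, compared in lexicographic order (a proper prefix is smaller than the word). A Lyndon word is a nonempty word strictly smaller than each of its proper nonempty suffixes. For a Lyndon word $r$ with $|r|\ge2$, its standard factorization is $r=r's'$ where $s'$ is the longest proper suffix of $r$ that is a Lyndon word; equivalently, $s'$ is the lexicographically smallest proper nonempty suffix of $r$. *)

(* Defs.v *)
From mathcomp Require Import all_boot all_order.
Set Implicit Arguments. Unset Strict Implicit. Unset Printing Implicit Defensive.
Import Order.TTheory.
Local Open Scope order_scope.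

Fixpoint lexlt {d} {T : orderType d} (u v : seq T) : bool :=
  match u, v with
  | [::], [::] => false
  | [::], _ :: _ => true
  | _ :: _, [::] => false
  | a :: u', b :: v' => (a < b) || ((a == b) && lexlt u' v')
  end.

Definition lexle {d} {T : orderType d} (u v : seq T) : bool :=
  (u == v) || lexlt u v.

Definition lyndon {d} {T : orderType d} (w : seq T) : bool :=
  (0 < size w)%N &&
  [forall k : 'I_(size w), (0 < k)%N ==> lexlt w (drop k w)].

(* s is the longest proper (nonempty) suffix of r that is a Lyndon word,
   i.e. the right factor of the standard factorization r = r' s'. *)
Definition std_right_factor {d} {T : orderType d} (r s : seq T) : Prop :=
  exists k : nat, [/\ (0 < k < size r)%N, s = drop k r, lyndon s &
    forall j : nat, (0 < j < size r)%N -> lyndon (drop j r) -> (k <= j)%N].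

Definition min_proper_suffix {d} {T : orderType d} (w s : seq T) : Prop :=
  exists k : nat, [/\ (0 < k < size w)%N, s = drop k w &
    forall j : nat, (0 < j < size w)%N -> lexle s (drop j w)].

(* Main.v *)
Require Import Defs.
From mathcomp Require Import all_boot all_order.
Import Order.TTheory.
From mathcomp Require Import zify.
Set Implicit Arguments. Unset Strict Implicit.

Section L.
Context {d : Order.disp_t} {T : orderType d}.
Implicit Types u v w : seq T.

Lemma lexlt_trans u v w : lexlt u v -> lexlt v w -> lexlt u w.
Proof.
elim: u v w => [|a u IH] [|b v] [|c w] //=.
case/orP=> [ab|/andP[/eqP<- uv]]; case/orP=> [bc|/andP[/eqP<- vw]].
- by rewrite (lt_trans ab bc).
- by rewrite ab.
- by rewrite bc.
- by rewrite eqxx (IH _ _ uv vw) orbT.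
Qed.

Lemma lexlt_irr u : lexlt u u = false.
Proof. by elim: u => //= a u ->; rewrite ltxx andbF. Qed.

Lemma lexlt_asym u v : lexlt u v -> lexlt v u -> False.
Proof. by move=> h1 h2; have := lexlt_trans h1 h2; rewrite lexlt_irr. Qed.

Lemma lexle_trans u v w : lexle u v -> lexle v w -> lexle u w.
Proof.
rewrite /lexle => /orP[/eqP->//|uv] /orP[/eqP<-|vw]; first by rewrite uv orbT.
by rewrite (lexlt_trans uv vw) orbT.
Qed.

Lemma lexle_total u v : lexle u v || lexle v u.
Proof.
rewrite /lexle; elim: u v => [|a u IH] [|b v] //=; rewrite ?orbT //.
case: (ltgtP a b) => //= ab; rewrite ?orbT //.
subst b; rewrite !eqseq_cons eqxx /=.
by case/orP: (IH v) => [/orP[/eqP->|->]|/orP[/eqP->|->]]; rewrite ?eqxx ?orbT.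
Qed.

Lemma lexle_lt_size u v : lexle u v -> size u != size v -> lexlt u v.
Proof. by rewrite /lexle => /orP[/eqP->|//]; rewrite eqxx. Qed.

Lemma lexle_lt_asym u v : lexle u v -> lexlt v u -> False.
Proof. by rewrite /lexle => /orP[/eqP->|h1 h2]; [rewrite lexlt_irr|exact: lexlt_asym h1 h2]. Qed.

Lemma pref_lemma u v w : lexle u v -> (size u < size (v ++ w))%N -> lexlt u (v ++ w).
Proof.
rewrite /lexle; elim: u v => [|a u IH] v.
  by move=> _; case: (v ++ w).
case: v => [|b v] /=.
  by [].
move=> h hs; rewrite ltnS in hs; case/or3P: h.
- rewrite eqseq_cons => /andP[/eqP <- /eqP ev]; subst v; by rewrite eqxx IH ?eqxx ?orbT.
- by move=> ->.
- by case/andP=> ab h; rewrite ab IH ?h ?orbT.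
Qed.

Lemma min_exists (f : nat -> seq T) n : exists i, (i <= n)%N /\ forall j, (j <= n)%N -> lexle (f i) (f j).
Proof.
elim: n => [|n [i [hi IH]]].
- by exists 0; split=> // j; rewrite leqn0 => /eqP->; rewrite /lexle eqxx.
case/orP: (lexle_total (f i) (f n.+1)) => h.
- exists i; split; first exact: leqW.
  move=> j; rewrite leq_eqVlt => /orP[/eqP->//|]; rewrite ltnS; exact: IH.
- exists n.+1; split=> // j; rewrite leq_eqVlt => /orP[/eqP->|]; first by rewrite /lexle eqxx.
  rewrite ltnS => hj; exact: lexle_trans h (IH j hj).
Qed.
End L.

Theorem lemma4p20 (d : Order.disp_t) (T : orderType d) (r r' s' u : seq T) :
  lyndon r -> (2 <= size r)%N ->
  r = r' ++ s' -> std_right_factor r s' ->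
  (0 < size u)%N -> lexle u s' -> lyndon (r ++ u) ->
  forall m : seq T, min_proper_suffix (r ++ u) m -> (size m <= size u)%N.
Proof.
move=> _ hr2 _ [k [/andP[k0 kn] es ls maxk]] u0 us _ m [jm [/andP[jm0 jmn] em minm]].
have smin : forall j, (0 < j < size r)%N -> lexle s' (drop j r).
  have [i0 [hi0 mini]] := min_exists (fun i => drop i.+1 r) (size r - 2).
  set v0 := drop i0.+1 r in mini.
  have sv0 : size v0 = (size r - i0.+1)%N by rewrite size_drop.
  have lv0 : lyndon v0.
    apply/andP; split; first by rewrite sv0; lia.
    apply/forallP => t; apply/implyP => t0.
    have ht : (t < size r - i0.+1)%N by rewrite -sv0 ltn_ord.
    apply: lexle_lt_size.
      rewrite /v0 drop_drop.
      have -> : (t + i0.+1 = (i0 + t).+1)%N by rewrite addnS addnC.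
      apply: mini; lia.
    rewrite size_drop; have := ltn_ord t; move: (nat_of_ord t) t0 => tt t0 htt; apply/eqP; lia.
  have ki0 : (k <= i0.+1)%N.
    apply: maxk lv0; lia.
  case: (ltngtP k i0.+1) ki0 => // [ki0 _|ki0 _].
    exfalso.
    have hv : v0 = drop (i0.+1 - k) s' by rewrite es drop_drop subnK // ltnW.
    move: ls => /andP[_ /forallP].
    have ht : (i0.+1 - k < size s')%N by rewrite es size_drop; lia.
    move=> /(_ (Ordinal ht)) /implyP /=; rewrite -hv subn_gt0 => /(_ ki0) h.
    apply: (lexle_lt_asym _ h).
    have -> : s' = drop (k.-1).+1 r by rewrite prednK.
    apply: mini; lia.
  move=> j hj; have := mini j.-1.
  rewrite prednK; last by case/andP: hj.
  rewrite -/v0 es ki0 /v0; apply; lia.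
rewrite leqNgt; apply/negP => hm.
have hjm : (jm < size r)%N.
  move: hm; rewrite em size_drop size_cat; lia.
have hv := minm (size r).
rewrite drop_size_cat // in hv.
have {}hv : lexle m u by apply: hv; rewrite size_cat; lia.
apply: (lexle_lt_asym hv).
rewrite em drop_cat hjm.
apply: pref_lemma.
  apply: lexle_trans us (smin _ _); lia.
rewrite size_cat size_drop; lia.
Qed.
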